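(* Let $n$ be a positive integer. All eigenvalues of the Fibonacci--Redheffer matrix $F_R(n)$ are real and simple (of algebraic multiplicity $1$). Furthermore, if $\lambda_1<\lambda_2<\cdots<\lambda_n$ are the eigenvalues of $F_R(n)$, then \[ \lambda_1<1,\qquad F_i<\lambda_i<F_{i+1}\ \ (i=2,3,\ldots,n-1),\qquad \lambda_n>F_n. \]
   Context: The Fibonacci numbers are $F_1=F_2=1$, $F_n=F_{n-1}+F_{n-2}$ for $n\ge 3$. The Fibonacci--Redheffer matrix $F_R(n)=[F_R(i,j)]_{i,j=1}^n$ is defined by $F_R(i,j)=1$ if $j=1$; $F_R(i,j)=F_i$ if $i\mid j$; and $F_R(i,j)=0$ otherwise. *)

(* Defs.v *)
From mathcomp Require Import all_boot all_order all_algebra.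
From mathcomp Require Import reals.
Set Implicit Arguments. Unset Strict Implicit. Unset Printing Implicit Defensive.
Import Order.TTheory GRing.Theory Num.Theory.
Local Open Scope ring_scope.

Fixpoint fib (n : nat) : nat :=
  match n with
  | 0 => 0
  | 1 => 1
  | (m.+1 as k).+1 => fib k + fib m
  end.

(* Fibonacci--Redheffer matrix F_R(n), with 0-based indices:
   entry (i, j) corresponds to the paper's (i+1, j+1). *)
Definition fibRedheffer (R : nzRingType) (n : nat) : 'M[R]_n :=
  \matrix_(i < n, j < n)
    if (j : nat) == 0%N then 1
    else if (i.+1 %| j.+1)%N then (fib i.+1)%:R else 0.

(* Main.v *)
Require Import Defs.
From mathcomp Require Import all_boot all_order all_algebra.
From mathcomp Require Import reals.
From mathcomp Require Import polyrcf perm.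
From mathcomp Require Import zify ring lra.
Import Order.TTheory GRing.Theory Num.Theory.
Local Open Scope ring_scope.

Lemma fibSS k : fib k.+2 = (fib k.+1 + fib k)%N.
Proof. by []. Qed.

Lemma fib_le1 k : (fib k <= fib k.+1)%N.
Proof. by case: k => [|k] //; rewrite fibSS leq_addr. Qed.

Lemma fib_mono {a b} : (a <= b)%N -> (fib a <= fib b)%N.
Proof.
move=> /subnK <-; elim: (b - a)%N => [|m IH] //.
by rewrite addSn (leq_trans IH) // fib_le1.
Qed.

Lemma fib_gt0 k : (0 < k)%N -> (0 < fib k)%N.
Proof. by move=> k0; have := @fib_mono 1 k k0. Qed.

Lemma fib_lt1 k : (2 <= k)%N -> (fib k < fib k.+1)%N.
Proof.
case: k => [|[|k]] // _; rewrite (fibSS k.+1) -[X in (X < _)%N]addn0 ltn_add2l.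
exact: fib_gt0.
Qed.

Lemma fib_strict a b : (2 <= a)%N -> (a < b)%N -> (fib a < fib b)%N.
Proof.
move=> a2 ab; have h1 := @fib_lt1 a a2; have h2 : (fib a.+1 <= fib b)%N := fib_mono ab; lia.
Qed.

Lemma fib_add2 a : (2 * fib a <= fib (a + 2))%N.
Proof. rewrite addn2 fibSS; have := fib_le1 a; lia. Qed.

Lemma fib_2d d : (2 <= d)%N -> (3 * fib d <= fib (2 * d))%N.
Proof.
case: d => [|[|[|d]]] // _.
have h1 := fib_add2 d.+3; have h2 := fib_le1 d.+3.
have h3 : (fib (d.+3 + 3) <= fib (2 * d.+3))%N by apply: fib_mono; lia.
have h4 : fib (d.+3 + 3) = (fib (d.+3 + 2) + fib d.+4)%N.
  by rewrite !addnS addn0 fibSS.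
lia.
Qed.

Lemma fib_md m d : (2 <= d)%N -> (2 <= m)%N -> ((2 ^ m.-1 + 1) * fib d <= fib (m * d))%N.
Proof.
move=> d2; elim: m => [|m IH] // m2.
case: (ltngtP m 1) => [m0|m1|m1].
- lia.
- have := IH m1.
  have h : (2 * fib (m * d) <= fib (m.+1 * d))%N.
    apply: leq_trans (fib_add2 _) (fib_mono _); rewrite mulSn; lia.
  case: m m1 IH {m2} h => [|m] //= _ _ IH h.
  rewrite expnS; nia.
- by rewrite m1 /= mul2n -mul2n; apply: fib_2d.
Qed.
Arguments fib_strict {a b}.
Arguments fib_md {m d}.
Arguments fib_gt0 {k}.
Arguments fib_lt1 {k}.
Arguments fib_2d {d}.

Section FL.
Variable R : realFieldType.

Definition flt (d l : nat) : R :=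
  if (d < l.+1)%N && (d %| l.+1)%N then (fib d)%:R / ((fib l.+1)%:R - (fib d)%:R) else 0.

Lemma flt_ge0 d l : (2 <= d)%N -> 0 <= flt d l.
Proof.
move=> d2; rewrite /flt; case: ifP => // /andP[dl _].
have := fib_strict d2 dl; rewrite -(ltr_nat R) => h.
by apply: divr_ge0; rewrite ?ler0n // subr_ge0 ltW.
Qed.

Lemma FL_inv d n : (2 <= d)%N ->
  \sum_(l < n) flt d l + (2^-1)^+((n %/ d).-1) <= 1.
Proof.
move=> d2; have d0 : (0 < d)%N by lia.
elim: n => [|n IH]; first by rewrite big_ord0 div0n expr0 add0r.
rewrite big_ord_recr /= divnS //.
rewrite /flt; case: ifP => [/andP[dl dv]|hn].
- set m := (n.+1 %/ d)%N.
  have qE : n.+1 = (m * d)%N by rewrite divnK.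
  have m2 : (2 <= m)%N by move: dl; rewrite qE; nia.
  have hm : (n %/ d = m.-1)%N by rewrite /m divnS // dv.
  rewrite dv add1n hm in IH *.
  have key := fib_md d2 m2; rewrite -qE in key.
  set a := fib d in key *; set b := fib n.+1 in key *.
  set P := (2 ^ m.-1)%N in key.
  have a0 : (0 < a)%N by apply: fib_gt0.
  have tb : a%:R / (b%:R - a%:R) <= (2^-1)^+m.-1 :> R.
    have ba : (a + P * a <= b)%N by lia.
    have P0 : (0 < P)%N by rewrite expn_gt0.
    have hba : 0 < b%:R - a%:R :> R.
      by rewrite subr_gt0 ltr_nat; nia.
    rewrite ler_pdivrMr // exprVn -(natrX R 2) -/P.
    rewrite mulrC ler_pdivlMr ?ltr0n // -natrM -natrB; last by nia.
    by rewrite ler_nat; nia.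
  have e : forall k, (0 < k)%N -> (2^-1)^+k.-1 = 2 * (2^-1)^+k :> R.
    by case=> // k _; rewrite exprS /= mulrA divff ?mul1r // pnatr_eq0.
  have m1 : (0 < m.-1)%N by lia.
  rewrite (e _ m1) in IH; lra.
- rewrite addr0; case dv: (d %| n.+1)%N; last by rewrite add0n.
  move: hn; rewrite dv andbT => /negbT; rewrite -leqNgt => h.
  have e : (n.+1 = d)%N by apply/eqP; rewrite eqn_leq h dvdn_leq.
  have -> : (n %/ d = 0)%N by rewrite divn_small // -e.
  by rewrite divn_small // -e in IH.
Qed.
End FL.

Lemma FL (R : realFieldType) d n : (2 <= d)%N -> \sum_(l < n) flt R d l < 1.
Proof.
move=> d2; have := FL_inv R d n d2.
have : 0 < (2^-1 : R)^+((n %/ d).-1) by rewrite exprn_gt0 // invr_gt0 ltr0n.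
lra.
Qed.

Lemma sign_prod_neg (R : realDomainType) (k : nat) (u v : R) :
  0 < (-1)^+k.+1 * u -> 0 < (-1)^+k * v -> u * v < 0.
Proof.
rewrite exprS -signr_odd; case: (odd k); rewrite /= ?expr1 ?expr0 => h1 h2.
- have hu : 0 < u by lra.
  have hv : v < 0 by lra.
  by rewrite pmulr_rlt0.
- have hu : u < 0 by lra.
  have hv : 0 < v by lra.
  by rewrite nmulr_rlt0.
Qed.

Lemma sign_prod_neg' (R : realDomainType) (k1 k2 : nat) (u v : R) :
  k1 = k2.+1 -> 0 < (-1)^+k1 * u -> 0 < (-1)^+k2 * v -> u * v < 0.
Proof. by move=> ->; apply: sign_prod_neg. Qed.
Arguments sign_prod_neg' {R k1 k2 u v}.

Section G.
Variable R : rcfType.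

Lemma big_right (p : {poly R}) : p \is monic -> exists N, forall x, N <= x -> 0 < p.[x].
Proof.
move=> /monicP lc; have lc0 : 0 < lead_coef p by rewrite lc ltr01.
have [N HN] := poly_pinfty_gt_lc lc0.
by exists N => x /HN; rewrite lc; apply: lt_le_trans.
Qed.

Lemma big_left (p : {poly R}) (n : nat) : p \is monic -> size p = n.+1 ->
  exists N, forall x, x <= N -> 0 < (-1)^+n * p.[x].
Proof.
move=> mp sp; set q := (-1)^+n *: (p \Po -'X).
have lq : lead_coef q = 1.
  rewrite /q lead_coefZ lead_coef_comp ?size_polyN ?size_polyX //.
  rewrite (monicP mp) lead_coefN lead_coefX sp /= mul1r.
  by rewrite -exprMn mulrNN mulr1 expr1n.
have lc0 : 0 < lead_coef q by rewrite lq ltr01.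
have [N HN] := poly_pinfty_gt_lc lc0.
exists (- N) => x xN; have := HN (- x); rewrite lerNr xN lq => /(_ isT).
rewrite /q hornerZ horner_comp hornerN hornerX opprK; apply: lt_le_trans.
exact: ltr01.
Qed.

Arguments big_left {p n}.
Arguments big_right {p}.

Lemma G (n : nat) (p : {poly R}) (a : nat -> R) :
  (2 <= n)%N -> p \is monic -> size p = n.+1 ->
  (forall k, (2 <= k)%N -> (k < n)%N -> a k < a k.+1) ->
  (forall k, (2 <= k)%N -> (k <= n)%N -> 0 < (-1)^+(n - k).+1 * p.[a k]) ->
  exists lam : 'I_n -> R,
   [/\ forall i j : 'I_n, (i < j)%N -> lam i < lam j,
       p = \prod_(i < n) ('X - (lam i)%:P),
       forall i : 'I_n, (i <= n - 2)%N -> lam i < a i.+2 &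
       forall i : 'I_n, (1 <= i)%N -> a i.+1 < lam i].
Proof.
move=> n2 mp sp amono asgn.
have hroot : forall i : 'I_n, exists x, [/\ root p x,
    (i <= n - 2)%N -> x < a i.+2 & (1 <= i)%N -> a i.+1 < x].
  move=> [i hi] /=.
  case: (posnP i) => [->|i0].
  - have [N HN] := big_left mp sp.
    set b := Num.min N (a 2%N - 1).
    have hb : b < a 2%N by rewrite gt_min; apply/orP; right; lra.
    have hbN : b <= N by rewrite ge_min lexx.
    have hpb := HN b hbN.
    have hpa := asgn 2%N (leqnn _) n2.
    have hneg : p.[b] * p.[a 2%N] < 0.
      by apply: (sign_prod_neg' _ hpb hpa); lia.
    have [x xin rx] := @poly_ivtoo R p b (a 2%N) (ltW hb) hneg.
    by move: xin; rewrite in_itv /= => /andP [x1 x2]; exists x; split.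
  case: (leqP i (n - 2)) => [hin|hin].
  - have hp1 := asgn i.+1 ltac:(lia) ltac:(lia).
    have hp2 := asgn i.+2 ltac:(lia) ltac:(lia).
    have hneg : p.[a i.+1] * p.[a i.+2] < 0.
      by apply: (sign_prod_neg' _ hp1 hp2); lia.
    have hab := amono i.+1 ltac:(lia) ltac:(lia).
    have [x xin rx] := @poly_ivtoo R p _ _ (ltW hab) hneg.
    by move: xin; rewrite in_itv /= => /andP [x1 x2]; exists x; split.
  - have ie : i = n.-1 by lia.
    have hpn := asgn n ltac:(lia) (leqnn _).
    rewrite subnn expr1 mulN1r oppr_gt0 in hpn.
    have [N HN] := big_right mp.
    set y := Num.max N (a n + 1).
    have hy : a n < y by rewrite lt_max; apply/orP; right; lra.
    have hyN : N <= y by rewrite le_max lexx.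
    have hpy := HN y hyN.
    have hneg : p.[a n] * p.[y] < 0 by rewrite nmulr_rlt0.
    have [x xin rx] := @poly_ivtoo R p _ _ (ltW hy) hneg.
    move: xin; rewrite in_itv /= => /andP [x1 x2].
    exists x; split => //; try (by move=> h; exfalso; lia).
    by move=> _; rewrite ie prednK //; lia.
have [lam hlam] := fin_all_exists hroot.
have lam_mono : forall i j : 'I_n, (i < j)%N -> lam i < lam j.
  move=> i j ij; have [_ hi _] := hlam i; have [_ _ hj] := hlam j.
  have jn := ltn_ord j.
  have hi' := hi ltac:(lia); have hj' := hj ltac:(lia).
  apply: (lt_trans hi'); apply: le_lt_trans hj'.
  have : forall u v, (2 <= u)%N -> (u <= v)%N -> (v <= n)%N -> a u <= a v.
    move=> u v u2 /subnK <-; elim: (v - u)%N => [|w IH] hv; first by [].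
    apply: le_trans (IH ltac:(lia)) (ltW (amono _ _ _)); lia.
  apply; lia.
exists lam; split => //; last first.
- by move=> i; have [] := hlam i.
- by move=> i; have [] := hlam i.
set rs := [seq lam i | i <- index_enum 'I_n].
have lam_inj : injective lam.
  move=> i j e; apply/eqP; case: (ltngtP i j) => [ij|ji|] //; last by move/val_inj/eqP.
  + by have := lam_mono _ _ ij; rewrite e ltxx.
  + by have := lam_mono _ _ ji; rewrite e ltxx.
have hdvd : \prod_(z <- rs) ('X - z%:P) %| p.
  apply: uniq_roots_dvdp.
    by apply/allP => z /mapP [i _ ->]; have [] := hlam i.
  by rewrite uniq_rootsE map_inj_uniq // index_enum_uniq.
rewrite big_map in hdvd.
apply/eqP; rewrite eq_sym -eqp_monic //; last exact: monic_prod_XsubC.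
rewrite -dvdp_size_eqp // size_prod_XsubC sp.
by rewrite /index_enum; unlock; rewrite -enumT size_enum_ord.
Qed.
End G.

Lemma SG (R : realDomainType) (f : nat -> R) (K m : nat) : (0 < K)%N ->
  f 0%N < 0 -> f K < 0 -> (forall i, (0 < i)%N -> (i < K)%N -> 0 < f i) ->
  (forall i, (K < i)%N -> f i < 0) -> (K < m)%N ->
  0 < (-1)^+(m - K.+1) * \prod_(i < m) f i.
Proof.
move=> K0 f0 fK fmid fhi; move: m.
have h1 : forall k, (0 < k)%N -> (k <= K)%N -> \prod_(i < k) f i < 0.
  elim=> [|k IH] // _ mK; rewrite big_ord_recr /=.
  case: (posnP k) => [->|m0]; first by rewrite big_ord0 mul1r.
  by rewrite nmulr_rlt0 ?IH ?fmid //; lia.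
elim=> [|m IH] // Km.
have [Km'|mK|eK] := ltngtP K m; last first.
    rewrite -eK subnn expr0 mul1r big_ord_recr /=.
    by rewrite nmulr_rgt0 // h1.
  by exfalso; lia.
  have := IH Km'; rewrite big_ord_recr /=.
  have -> : (m.+1 - K.+1 = (m - K.+1).+1)%N by lia.
  rewrite exprS => h; have := fhi _ Km'.
  set P := \prod_(i < m) f i; set s := (-1)^+(m - K.+1) : R.
  move=> hm; have : 0 < (s * P) * (- f m) by rewrite mulr_gt0 // oppr_gt0.
  lra.
Qed.

Lemma char_eval (R : comNzRingType) n (A : 'M[R]_n) x0 :
  (char_poly A).[x0] = \det (\matrix_(i, j) ((i == j)%:R * x0 - A i j)).
Proof.
rewrite /char_poly -horner_evalE -det_map_mx; congr (\det _); apply/matrixP => i j.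
rewrite !mxE; change ((('X *+ (i == j) - (A i j)%:P) : {poly R}).[x0] = (i == j)%:R * x0 - A i j).
by rewrite hornerD hornerN hornerC hornerMn hornerX mulr_natl.
Qed.

Lemma trisolve (R : fieldType) m (U : 'M[R]_m) (b : 'cV[R]_m) :
  (forall i j : 'I_m, (j < i)%N -> U i j = 0) -> (forall i, U i i != 0) ->
  exists v : 'cV_m, U *m v = b.
Proof.
move=> Ut Ud.
have hdet : \det U = \prod_i U i i.
  rewrite -det_tr det_trig; first by apply: eq_bigr => i _; rewrite mxE.
  by apply/is_trig_mxP => i j ij; rewrite mxE Ut.
have hu : U \in unitmx.
  by rewrite unitmxE hdet unitfE; apply/prodf_neq0 => i _.
by exists (invmx U *m b); rewrite mulmxA mulmxV // mul1mx.
Qed.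

Lemma ord_eqF m (i j : 'I_m) : (j < i)%N -> (i == j) = false.
Proof. by move=> ji; apply/negbTE; rewrite neq_ltn ji orbT. Qed.

Section Key.
Variable R : realFieldType.
Variables (n : nat) (K : 'I_n).
Hypothesis K0 : (0 < K)%N.

Definition A := fibRedheffer R n.
Definition x : R := (fib K.+1)%:R.
Definition Mx : 'M[R]_n := \matrix_(i, j) ((i == j)%:R * x - A i j).
Definition o0 : 'I_n := Ordinal (ltn_trans K0 (ltn_ord K)).

Lemma AE i j : A i j = if (j : nat) == 0%N then 1 else if (i.+1 %| j.+1)%N then (fib i.+1)%:R else 0.
Proof. by rewrite /A /fibRedheffer mxE. Qed.

Lemma ME i j : Mx i j = (i == j)%:R * x - A i j.
Proof. by rewrite mxE. Qed.

Lemma M_low (i j : 'I_n) : (0 < j)%N -> (j < i)%N -> Mx i j = 0.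
Proof.
move=> j0 ji; rewrite ME AE gtn_eqF //.
have -> : (i == j) = false by apply/negbTE; rewrite neq_ltn ji orbT.
have -> : (i.+1 %| j.+1)%N = false.
  by apply/negbTE/negP => /dvdn_leq => /(_ isT); lia.
by rewrite mul0r subr0.
Qed.

Lemma M_diag (i : 'I_n) : (0 < i)%N -> Mx i i = x - (fib i.+1)%:R.
Proof. by move=> i0; rewrite ME AE gtn_eqF // eqxx dvdnn mul1r. Qed.

Lemma M_off (i j : 'I_n) : i != j -> (0 < j)%N ->
  Mx i j = - (if (i.+1 %| j.+1)%N then (fib i.+1)%:R else 0).
Proof. by move=> /negbTE ij j0; rewrite ME AE gtn_eqF // ij mul0r sub0r. Qed.

Lemma M_off_le0 (i j : 'I_n) : i != j -> (0 < j)%N -> Mx i j <= 0.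
Proof. by move=> ij j0; rewrite M_off // oppr_le0; case: ifP => // _; rewrite ler0n. Qed.

Lemma M_row0 (j : 'I_n) : (0 < j)%N -> Mx o0 j = -1.
Proof.
move=> j0; rewrite M_off //; first by rewrite dvd1n.
by apply/eqP => /(congr1 val) /= e; lia.
Qed.

Lemma M_col0 (i : 'I_n) : (0 < i)%N -> Mx i o0 = -1.
Proof.
move=> i0; rewrite ME AE /=.
have -> : (i == o0) = false by apply/negbTE/eqP => /(congr1 val) /= e; lia.
by rewrite mul0r sub0r.
Qed.

Lemma M_KK : Mx K K = 0.
Proof. by rewrite M_diag // subrr. Qed.

Lemma fib_lt_x (i : nat) : (0 < i)%N -> (i < K)%N -> (fib i.+1)%:R < x.
Proof. by move=> i0 iK; rewrite ltr_nat; apply: fib_strict; lia. Qed.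

Lemma x_lt_fib (i : nat) : (K < i)%N -> x < (fib i.+1)%:R.
Proof. by move=> iK; rewrite ltr_nat; apply: fib_strict; lia. Qed.

Lemma x_le_fib (i : nat) : (K <= i)%N -> x <= (fib i.+1)%:R.
Proof. by move=> iK; rewrite ler_nat; apply: fib_mono; lia. Qed.

Definition Uz : 'M[R]_n := \matrix_(i, l) if (K < i)%N && (K < l)%N then Mx i l else (i == l)%:R.
Definition bz : 'cV[R]_n := \col_i (if (K < i)%N then 1 else 0).

Lemma z_ex : exists z : 'I_n -> R,
  forall i : 'I_n, (K < i)%N -> \sum_(l : 'I_n | (K < l)%N) Mx i l * z l = 1.
Proof.
have [v hv] : exists v : 'cV_n, Uz *m v = bz.
  apply: trisolve.
  move=> i j ji; rewrite mxE; case: ifP => [/andP[Ki Kj]|_].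
    by apply: M_low => //; lia.
  by rewrite ord_eqF // mul0r.
  move=> i; rewrite mxE eqxx; case: ifP => [/andP[Ki _]|_]; last by rewrite oner_neq0.
  rewrite M_diag; last by lia.
  by rewrite subr_eq0 lt_eqF // x_lt_fib.
exists (fun l => v l 0) => i Ki.
have := congr1 (fun m : 'cV[R]_n => m i 0) hv; rewrite !mxE Ki => <-.
rewrite big_mkcond /=; apply: eq_bigr => l _; rewrite [in RHS]mxE Ki /=.
case: ifP => // /negbT; rewrite -leqNgt => Kl.
have -> : (i == l) = false by apply: ord_eqF; lia.
by rewrite mul0r.
Qed.

Definition Uy : 'M[R]_n := \matrix_(i, l) if [&& (0 < i)%N, (i < K)%N, (0 < l)%N & (l < K)%N] then Mx i l else (i == l)%:R.
Definition by_ : 'cV[R]_n := \col_i if (0 < i)%N && (i < K)%N then - Mx i K else 0.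

Lemma y_ex : exists y : 'I_n -> R,
  forall i : 'I_n, (0 < i)%N -> (i < K)%N -> \sum_(l : 'I_n | (0 < l)%N && (l < K)%N) Mx i l * y l = - Mx i K.
Proof.
have [v hv] : exists v : 'cV_n, Uy *m v = by_.
  apply: trisolve.
  move=> i j ji; rewrite mxE; case: ifP => [/and4P[]|_].
    by move=> *; apply: M_low.
  by rewrite ord_eqF // mul0r.
  move=> i; rewrite mxE eqxx; case: ifP => [/and4P[i0 iK _ _]|_]; last by rewrite oner_neq0.
  by rewrite M_diag // subr_eq0 gt_eqF // fib_lt_x.
exists (fun l => v l 0) => i i0 iK.
have := congr1 (fun m : 'cV[R]_n => m i 0) hv; rewrite !mxE i0 iK /= => <-.
rewrite big_mkcond /=; apply: eq_bigr => l _; rewrite [in RHS]mxE i0 iK /=.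
case: ifP => // hl.
have -> : (i == l) = false by apply/negbTE; apply: contraFneq hl => <-; rewrite i0 iK.
by rewrite mul0r.
Qed.

Section Z.
Variable z : 'I_n -> R.
Hypothesis hz : forall i : 'I_n, (K < i)%N -> \sum_(l : 'I_n | (K < l)%N) Mx i l * z l = 1.

Lemma term_bound (i l : 'I_n) : (K <= i)%N -> (i < l)%N -> z l <= 0 ->
  Mx l l * z l <= 1 -> 0 <= Mx i l * z l /\ Mx i l * z l <= flt R i.+1 l.
Proof.
move=> Ki il zl0 zl1.
have l0 : (0 < l)%N by lia.
have hil : i != l by rewrite neq_ltn il.
rewrite M_off // /flt ltnS il /=.
rewrite M_diag // in zl1.
case: ifP => _; last by rewrite oppr0 mul0r lexx.
have hxi := x_le_fib _ Ki.
have hil' : (fib i.+1)%:R < (fib l.+1)%:R :> R by rewrite ltr_nat; apply: fib_strict; lia.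
have Fi0 : 0 <= (fib i.+1)%:R :> R by rewrite ler0n.
split; first by nra.
have D0 : 0 < (fib l.+1)%:R - (fib i.+1)%:R :> R by lra.
rewrite ler_pdivlMr //.
have h1 : ((fib l.+1)%:R - (fib i.+1)%:R) * (- z l) <= 1 by nra.
have := ler_wpM2l Fi0 h1.
lra.
Qed.

Lemma zb_aux m : forall i : 'I_n, (n - i <= m)%N -> (K < i)%N -> z i <= 0 /\ Mx i i * z i <= 1.
Proof.
elim: m => [|m IH] i hm Ki; first by have := ltn_ord i; lia.
have IH' : forall l : 'I_n, (i < l)%N -> z l <= 0 /\ Mx l l * z l <= 1.
  by move=> l il; apply: IH; have := ltn_ord l; lia.
have e := hz i Ki.
rewrite (bigD1 i) /= in e; last exact: Ki.
set Rr := \sum_(l | _) _ in e.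
have Rr_ge0 : 0 <= Rr.
  apply: sumr_ge0 => l /andP [Kl li].
  case: (ltngtP l i) => [l_lt_i|i_lt_l|el].
  - by rewrite M_low ?mul0r //; lia.
  - by have [h1 h2] := IH' l i_lt_l; have [] := term_bound i l (ltnW Ki) i_lt_l h1 h2.
  - by move: li; rewrite (val_inj el) eqxx.
have Rr_lt1 : Rr < 1.
  rewrite /Rr big_mkcond /=; apply: le_lt_trans (FL R i.+1 n (_ : (2 <= i.+1)%N)); last by lia.
  apply: ler_sum => l _; case: ifP => [/andP[Kl li]|_]; last by apply: flt_ge0; lia.
  case: (ltngtP l i) => [l_lt_i|i_lt_l|el].
  - by rewrite M_low ?mul0r ?flt_ge0 //; lia.
  - by have [h1 h2] := IH' l i_lt_l; have [] := term_bound i l (ltnW Ki) i_lt_l h1 h2.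
  - by move: li; rewrite (val_inj el) eqxx.
have hM : Mx i i < 0 by rewrite M_diag; [rewrite subr_lt0 x_lt_fib | lia].
have hMz : 0 < Mx i i * z i by lra.
split; last by lra.
by rewrite nmulr_rgt0 // in hMz; apply: ltW.
Qed.

Lemma zb (i : 'I_n) : (K < i)%N -> z i <= 0 /\ Mx i i * z i <= 1.
Proof. by apply: (zb_aux (n - i)). Qed.

Lemma SZK : \sum_(l : 'I_n | (K < l)%N) Mx K l * z l < 1.
Proof.
rewrite big_mkcond /=; apply: le_lt_trans (FL R K.+1 n (_ : (2 <= K.+1)%N)); last by lia.
apply: ler_sum => l _; case: ifP => [Kl|_]; last by apply: flt_ge0; lia.
by have [h1 h2] := zb l Kl; have [] := term_bound K l (leqnn K) Kl h1 h2.
Qed.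
End Z.

Section Y.
Variable y : 'I_n -> R.
Hypothesis hy : forall i : 'I_n, (0 < i)%N -> (i < K)%N ->
  \sum_(l : 'I_n | (0 < l)%N && (l < K)%N) Mx i l * y l = - Mx i K.

Lemma yb_aux m : forall i : 'I_n, (K - i <= m)%N -> (0 < i)%N -> (i < K)%N -> 0 <= y i.
Proof.
elim: m => [|m IH] i hm i0 iK; first by lia.
have IH' : forall l : 'I_n, (i < l)%N -> (l < K)%N -> 0 <= y l.
  by move=> l il lK; apply: IH => //; lia.
have e := hy i i0 iK.
rewrite (bigD1 i) /= in e; last by rewrite i0 iK.
set Rr := \sum_(l | _) _ in e.
have Rr_le0 : Rr <= 0.
  apply: sumr_le0 => l /andP [/andP [l0 lK] li].
  case: (ltngtP l i) => [l_lt_i|i_lt_l|el].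
  - by rewrite M_low ?mul0r.
  - apply: mulr_le0_ge0; last exact: IH'.
    by apply: M_off_le0; rewrite // eq_sym.
  - by move: li; rewrite (val_inj el) eqxx.
have hMK : 0 <= - Mx i K.
  by rewrite oppr_ge0; apply: M_off_le0; rewrite // neq_ltn iK.
have hM : 0 < Mx i i by rewrite M_diag // subr_gt0 fib_lt_x.
have hMy : 0 <= Mx i i * y i by lra.
by rewrite pmulr_rge0 in hMy.
Qed.

Lemma yb (i : 'I_n) : (0 < i)%N -> (i < K)%N -> 0 <= y i.
Proof. by apply: (yb_aux (K - i)). Qed.
End Y.


Lemma addE (X Y : 'M[R]_n) i j : (X + Y) i j = X i j + Y i j.
Proof. by rewrite mxE. Qed.

Lemma oneE i j : (1%:M : 'M[R]_n) i j = (i == j)%:R.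
Proof. by rewrite mxE. Qed.

Section D.
Variable z : 'I_n -> R.
Hypothesis hz : forall i : 'I_n, (K < i)%N -> \sum_(l : 'I_n | (K < l)%N) Mx i l * z l = 1.
Variable y : 'I_n -> R.
Hypothesis hy : forall i : 'I_n, (0 < i)%N -> (i < K)%N ->
  \sum_(l : 'I_n | (0 < l)%N && (l < K)%N) Mx i l * y l = - Mx i K.

Definition Zm : 'M[R]_n := \matrix_(l, j) if ((j : nat) == 0%N) && (K < l)%N then z l else 0.
Definition Ym : 'M[R]_n := \matrix_(l, j) if (j == K) && ((0 < l)%N && (l < K)%N) then y l else 0.
Definition SZ (i : 'I_n) := \sum_(l : 'I_n | (K < l)%N) Mx i l * z l.
Definition SY (i : 'I_n) := \sum_(l : 'I_n | (0 < l)%N && (l < K)%N) Mx i l * y l.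
Definition W := Mx *m (1%:M + Zm) *m (1%:M + Ym).

Lemma XZ_E (X : 'M[R]_n) i j : (X *m Zm) i j =
  if (j : nat) == 0%N then \sum_(l : 'I_n | (K < l)%N) X i l * z l else 0.
Proof.
rewrite mxE; case: ifP => j0.
  rewrite [RHS]big_mkcond; apply: eq_bigr => l _; rewrite mxE j0 /=.
  by case: ifP => //; rewrite mulr0.
by apply: big1 => l _; rewrite mxE j0 mulr0.
Qed.

Lemma XY_E (X : 'M[R]_n) i j : (X *m Ym) i j =
  if j == K then \sum_(l : 'I_n | (0 < l)%N && (l < K)%N) X i l * y l else 0.
Proof.
rewrite mxE; case: ifP => jK.
  rewrite [RHS]big_mkcond; apply: eq_bigr => l _; rewrite mxE jK /=.
  by case: ifP => //; rewrite mulr0.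
by apply: big1 => l _; rewrite mxE jK mulr0.
Qed.

Lemma WE i j : W i j = Mx i j + (if (j : nat) == 0%N then SZ i else 0)
  + (if j == K then SY i else 0).
Proof.
rewrite /W mulmxDr mulmx1 mulmxDr mulmx1 !addE XZ_E XY_E.
congr (_ + _); case: ifP => // _; rewrite /SY.
apply: eq_bigr => l /andP [l0 _]; rewrite addE XZ_E gtn_eqF //.
by rewrite addr0.
Qed.

Lemma det_Ea : \det (1%:M + Zm) = 1.
Proof.
rewrite det_trig.
  apply: big1 => i _; rewrite addE oneE eqxx mxE.
  by case: ifP => [/andP[/eqP i0 Ki]|_]; [exfalso; lia | rewrite addr0].
apply/is_trig_mxP => i j ij; rewrite addE oneE mxE eq_sym ord_eqF // add0r.
by case: ifP => [/andP[/eqP j0 _]|_] //; exfalso; lia.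
Qed.

Lemma det_Eb : \det (1%:M + Ym) = 1.
Proof.
rewrite -det_tr det_trig.
  apply: big1 => i _; rewrite mxE addE oneE eqxx mxE.
  by case: ifP => [/andP[/eqP iK /andP[_ ]]|_]; [rewrite iK ltnn | rewrite addr0].
apply/is_trig_mxP => i j ij; rewrite mxE addE oneE mxE ord_eqF // add0r.
by case: ifP => [/andP[/eqP iK /andP[_ jK]]|_] //; exfalso; move: iK ij jK => ->; lia.
Qed.

Lemma det_W : \det W = \det Mx.
Proof. by rewrite /W !det_mulmx det_Ea det_Eb !mulr1. Qed.

Definition W' := xcol o0 K W.

Lemma o0K : o0 != K.
Proof. by rewrite neq_ltn /= K0. Qed.

Lemma det_W' : \det W' = - \det Mx.
Proof.
rewrite /W' xcolE det_mulmx det_perm odd_tperm o0K det_W.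
by rewrite expr1 mulrN1.
Qed.

Lemma W'E i j : W' i j = W i (tperm o0 K j).
Proof. by rewrite /W' /xcol /col_perm mxE. Qed.


Lemma W'_up (i j : 'I_n) : (j < i)%N -> W' i j = 0.
Proof.
move=> ji; rewrite W'E.
have hK0 : ((K : nat) == 0%N) = false by rewrite gtn_eqF.
have o0Kf : (o0 == K) = false by apply/negbTE; exact: o0K.
case: (eqVneq j o0) => [ej|j0].
  rewrite ej tpermL WE hK0 eqxx addr0.
  have i0 : (0 < i)%N by move: ji; rewrite ej.
  case: (ltngtP i K) => [iK|Ki|iK].
  - by rewrite /SY hy // addrN.
  - rewrite M_low // add0r /SY big1 // => l /andP [l0 lK].
    by rewrite M_low ?mul0r //; lia.
  - rewrite (val_inj iK) M_KK add0r /SY big1 // => l /andP [l0 lK].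
    by rewrite M_low ?mul0r.
case: (eqVneq j K) => [ej|jK].
  rewrite ej tpermR WE /= o0Kf addr0.
  have Ki : (K < i)%N by rewrite -ej.
  by rewrite M_col0 /SZ ?hz ?addNr //; lia.
rewrite tpermD; [|by rewrite eq_sym|by rewrite eq_sym].
have jn0 : ((j : nat) == 0%N) = false.
  by apply/negbTE; apply: contra j0 => /eqP e; apply/eqP/val_inj.
rewrite WE jn0 (negbTE jK) !addr0 M_low //; lia.
Qed.

Definition dg (i : nat) : R :=
  if i == 0%N then - (1 + \sum_(l : 'I_n | (0 < l)%N && (l < K)%N) y l)
  else if i == K then -1 + SZ K else x - (fib i.+1)%:R.

Lemma W'_diag (i : 'I_n) : W' i i = dg i.
Proof.
rewrite W'E.
have hK0 : ((K : nat) == 0%N) = false by rewrite gtn_eqF.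
have o0Kf : (o0 == K) = false by apply/negbTE; exact: o0K.
case: (eqVneq i o0) => [->|i0].
  rewrite tpermL WE hK0 eqxx addr0 M_row0 // /SY /dg /=.
  rewrite (eq_bigr (fun l => - y l)); last by move=> l /andP [l0 _]; rewrite M_row0 // mulN1r.
  by rewrite sumrN opprD.
case: (eqVneq i K) => [->|iK].
  by rewrite tpermR WE /= o0Kf addr0 M_col0 // /dg hK0 eqxx.
have in0 : ((i : nat) == 0%N) = false.
  by apply/negbTE; apply: contra i0 => /eqP e; apply/eqP/val_inj.
rewrite tpermD; [|by rewrite eq_sym|by rewrite eq_sym].
rewrite WE in0 (negbTE iK) !addr0 M_diag; last by rewrite lt0n in0.
have iKn : ((i : nat) == K) = false by apply/negbTE; exact: iK.
by rewrite /dg in0 iKn.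
Qed.

Lemma det_Mx_dg : \det Mx = - \prod_(i < n) dg i.
Proof.
apply/eqP; rewrite -eqr_oppLR -det_W' -det_tr det_trig.
  by apply/eqP/eq_bigr => i _; rewrite mxE W'_diag.
by apply/is_trig_mxP => i j ij; rewrite mxE W'_up.
Qed.


Lemma det_sign : 0 < (-1)^+(n - K.+1).+1 * \det Mx.
Proof.
rewrite det_Mx_dg exprS mulN1r mulrN mulNr opprK.
apply: SG => //.
- rewrite /dg /= oppr_lt0; apply: lt_le_trans ltr01 _; rewrite lerDl.
  by apply: sumr_ge0 => l /andP [l0 lK]; exact: (yb _ hy).
- by rewrite /dg gtn_eqF // eqxx; have := SZK _ hz; rewrite /SZ; lra.
- move=> i i0 iK; rewrite /dg gtn_eqF // ltn_eqF // subr_gt0.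
  exact: fib_lt_x.
- move=> i Ki; rewrite /dg gtn_eqF ?gtn_eqF //; last by lia.
  by rewrite subr_lt0 x_lt_fib.
Qed.
End D.
End Key.

Lemma key (R : realFieldType) n (K : 'I_n) : (0 < K)%N ->
  0 < (-1)^+(n - K.+1).+1 * (char_poly (fibRedheffer R n)).[(fib K.+1)%:R].
Proof.
move=> K0; have [z hz] := @z_ex R n K K0; have [y hy] := @y_ex R n K K0.
rewrite char_eval; exact: (@det_sign R n K K0 z hz y hy).
Qed.

Theorem theorem5 (R : realType) (n : nat) (hn : (0 < n)%N) :
  exists lam : 'I_n -> R,
    [/\ (forall i j : 'I_n, (i < j)%N -> lam i < lam j),
        char_poly (fibRedheffer R n) = \prod_(i < n) ('X - (lam i)%:P)
      & (1 < n)%N ->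
        [/\ forall i : 'I_n, (i : nat) = 0%N -> lam i < 1,
            forall i : 'I_n, (1 <= i)%N -> (i <= n - 2)%N ->
              (fib i.+1)%:R < lam i /\ lam i < (fib i.+2)%:R
          & forall i : 'I_n, (i : nat) = n.-1 -> (fib n)%:R < lam i]].
Proof.
set p := char_poly (fibRedheffer R n).
have mp : p \is monic := char_poly_monic _.
have sp : size p = n.+1 := size_char_poly _.
case: (ltngtP n 1) => [|n2|n1]; first by lia.
- have amono : forall k, (2 <= k)%N -> (k < n)%N -> ((fib k)%:R : R) < (fib k.+1)%:R.
    by move=> k k2 _; rewrite ltr_nat; apply: fib_lt1.
  have asgn : forall k, (2 <= k)%N -> (k <= n)%N ->
      0 < (-1)^+(n - k).+1 * p.[(fib k)%:R].
    move=> k k2 kn; have hK : (k.-1 < n)%N by lia.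
    set K := Ordinal hK.
    have eK : (K.+1 = k)%N by rewrite /= prednK //; lia.
    have := @key R n K ltac:(simpl; lia).
    by rewrite eK.
  have [lam [mono eq up low]] := @G R n p (fun k => (fib k)%:R) n2 mp sp amono asgn.
  exists lam; split => // _; split.
  + by move=> i i0; have := up i ltac:(lia); rewrite i0.
  + by move=> i i1 i2; split; [apply: low | apply: up].
  + by move=> i iE; have := low i ltac:(lia); rewrite iE prednK.
- subst n; exists (fun _ => - p`_0); split => //.
  + by move=> [i hi] [j hj] /= ij; exfalso; lia.
  rewrite big_ord1 polyCN opprK; apply/polyP => i.
  rewrite coefD coefX coefC.
  case: i => [|[|i]] /=.
  * by rewrite add0r.
  * by rewrite addr0; have := monicP mp; rewrite /lead_coef sp.
  * by rewrite addr0 nth_default // sp.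
Qed.
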